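(* For every integer $h \geq 3$, \[ \frac{\sin\bigl(\pi\sqrt{3/h}\bigr)}{\pi\sqrt{3/h}} < \left( \frac{4}{3 - \cos(\pi/h)} - 1 \right)^h . \] Consequently $x_h < \pi\sqrt{3/h}$ for all $h \geq 3$, where $x_h$ is the unique real number in $(0,\pi)$ with $\frac{\sin x_h}{x_h} = \left( \frac{4}{3-\cos(\pi/h)} - 1\right)^h$. *)

(* Defs.v *)
From Stdlib Require Import Reals.
Open Scope R_scope.

Definition rhs_h (h : nat) : R := (4 / (3 - cos (PI / INR h)) - 1) ^ h.

Definition bound_h (h : nat) : R := PI * sqrt (3 / INR h).

(* Main.v *)
Require Import Defs.
From Stdlib Require Import Reals Lra Lia Psatz.
From Coquelicot Require Import Coquelicot.
Open Scope R_scope.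

Lemma f8 : INR (Factorial.fact 8) = 40320.
Proof. rewrite INR_IZR_INZ. reflexivity. Qed.
Lemma f6 : INR (Factorial.fact 6) = 720.
Proof. rewrite INR_IZR_INZ. reflexivity. Qed.
Lemma cos4 t : cos_approx t 4 = 1 - t^2/2 + t^4/24 - t^6/720 + t^8/40320.
Proof. unfold cos_approx, cos_term. cbn [sum_f_R0 Nat.mul Nat.add]. rewrite f8, f6. 
 simpl. field. Qed.
Lemma cos3 t : cos_approx t 3 = 1 - t^2/2 + t^4/24 - t^6/720.
Proof. unfold cos_approx, cos_term. cbn [sum_f_R0 Nat.mul Nat.add]. rewrite f6. simpl. field. Qed.
Lemma sin2 t : sin_approx t 2 = t - t^3/6 + t^5/120.
Proof. unfold sin_approx, sin_term. simpl. field. Qed.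
Lemma PI_ub : PI <= 16/5.
Proof. destruct (Rle_lt_dec PI (16/5)) as [h|h]; auto.
 exfalso. assert (c := cos_gt_0 (8/5)). assert (b := cos_bound (8/5) 1).
 replace (2*(1+1))%nat with 4%nat in b by reflexivity. rewrite cos4 in b. lra. Qed.
Lemma psi_neg c : 0 < c < PI -> c * cos c - sin c < 0.
Proof. intros [h1 h2].
 destruct (MVT_cor2 (fun z => z * cos z - sin z) (fun z => - (z * sin z)) 0 c h1) as [d [E [d1 d2]]].
 { intros z _. apply is_derive_Reals. auto_derive; auto. ring. }
 rewrite cos_0, sin_0 in E.
 assert (0 < sin d) by (apply sin_gt_0; lra).
 assert (0 < d * sin d) by nra. nra. Qed.
Lemma sinc_decr b x : 0 < b -> b < x -> x < PI -> sin x / x < sin b / b.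
Proof. intros hb hbx hx.
 destruct (MVT_cor2 (fun z => sin z / z) (fun z => (z * cos z - sin z) / z^2) b x hbx) as [d [E [d1 d2]]].
 { intros z hz. apply is_derive_Reals. auto_derive. lra. field. lra. }
 assert (Hp : d * cos d - sin d < 0) by (apply psi_neg; lra).
 assert (0 < d^2) by nra.
 assert ((d * cos d - sin d) / d ^ 2 < 0).
 { unfold Rdiv. apply Rmult_neg_pos; auto. apply Rinv_0_lt_compat; auto. }
 nra. Qed.
Lemma nat3 n : 0 <= INR n * (INR n - 1) * (INR n - 2).
Proof. destruct n as [|[|[|n]]]; [simpl; lra|simpl; lra|simpl; lra|].
 assert (0 <= INR n) by apply pos_INR. rewrite !S_INR.
 assert (0 <= (INR n + 1 + 1 + 1) * (INR n + 1 + 1 + 1 - 1)) by nra. nra. Qed.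
Lemma bern3 n u : 0 <= u <= 1 ->
 1 - INR n * u + INR n * (INR n - 1)/2 * u^2 - INR n * (INR n - 1) * (INR n - 2) / 6 * u^3 <= (1-u)^n.
Proof. intros hu. induction n as [|n IH].
 - simpl. lra.
 - rewrite S_INR. change ((1-u)^(S n)) with ((1-u)*(1-u)^n).
   assert (E : 1 - (INR n + 1) * u + (INR n + 1) * (INR n + 1 - 1) / 2 * u ^ 2 -
     (INR n + 1) * (INR n + 1 - 1) * (INR n + 1 - 2) / 6 * u ^ 3 =
     (1-u) * (1 - INR n * u + INR n * (INR n - 1)/2 * u^2 - INR n * (INR n - 1) * (INR n - 2) / 6 * u^3)
     - INR n * (INR n - 1) * (INR n - 2) / 6 * u^4) by field.
   rewrite E. assert (h3 := nat3 n).
   assert (0 <= INR n * (INR n - 1) * (INR n - 2) / 6 * u^4).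
   { apply Rmult_le_pos; [lra| apply pow_le; lra]. }
   assert ((1-u) * (1 - INR n * u + INR n * (INR n - 1)/2 * u^2 - INR n * (INR n - 1) * (INR n - 2) / 6 * u^3) <= (1-u)*(1-u)^n).
   { apply Rmult_le_compat_l; lra. }
   lra. Qed.
Lemma epsb s : 0 < s <= 64/100 ->
 let D := s/2 - s^2/24 + s^3/720 in
 s^2*(1/3 - 17*s/720)*(1/2 - s/8) <= s/2 - 2*D/(2+D).
Proof. intros hs D.
 assert (hD0 : 0 <= D) by (unfold D; nra).
 assert (hD1 : D <= s/2) by (unfold D; nra).
 assert (E : s/2 - 2*D/(2+D) = (2*s^2/3 - 17*s^3/360 + s^4/720) / (2*(2+D))) by (unfold D; field; nra).
 rewrite E.
 assert (hX : 0 <= s^2/3 - 17*s^3/720) by nra.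
 assert (hinv : (1/2)*(1/2 - s/8) <= / (2*(2+D))).
 { apply Rmult_le_reg_r with (2*(2+D)); [lra|]. rewrite Rinv_l by lra. nra. }
 unfold Rdiv at 1.
 assert (2*(s^2/3 - 17*s^3/720) <= 2*s^2/3 - 17*s^3/360 + s^4/720) by nra.
 assert (0 <= 1/2 - s/8) by lra.
 apply Rle_trans with ((2*(s^2/3 - 17*s^3/720)) * ((1/2)*(1/2 - s/8))).
 - nra.
 - apply Rmult_le_compat; nra.
Qed.
Lemma C1_lb e a : 0 < e <= 1/4 -> 1/4 <= 1-(1-e)*a/2+(1-e)*(1-2*e)*a*a/8.
Proof. intros [h1 h2].
   assert (0 < 1-2*e) by lra.
   assert (0 <= (1-2*e)*((1-e)*a/2 - (1-e)/(1-2*e))^2) by (apply Rmult_le_pos; [lra| apply pow2_ge_0]).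
   assert (e3 : (1-e)/(1-2*e) <= 3/2). { apply Rmult_le_reg_r with (1-2*e); auto. field_simplify; lra. }
   assert (E: (1-2*e)*((1-e)*a/2 - (1-e)/(1-2*e))^2 = (1-e)^2*(1-2*e)*a^2/4 - (1-e)^2*a + (1-e)*((1-e)/(1-2*e))).
   { field. lra. }
   assert (0 <= 1-e) by lra.
   assert ((1-e)*((1-e)/(1-2*e)) <= (1-e)*(3/2)) by (apply Rmult_le_compat_l; lra).
   nra. Qed.
Lemma polyR e a : 0 < e <= 1/4 -> 9*e <= a <= 1024/100*e ->
 0 < (1-e)/8-3/40-(1-e)*(1-2*e)*a/48+e*(1/3-17*a*e/720)*(1/2-e*a/8)*(1-(1-e)*a/2+(1-e)*(1-2*e)*a*a/8).
Proof. intros [h1 h2] [h3 h4].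
 assert (ha : a <= 256/100) by lra.
 assert (hae : a*e <= 64/100) by nra.
 assert (hA : 318/1000 <= 1/3-17*a*e/720) by lra.
 assert (hB : 42/100 <= 1/2-e*a/8) by lra.
 assert (hC := C1_lb e a (conj h1 h2)).
 assert (hP : e*(318/1000*(42/100)*(1/4)) <= e*(1/3-17*a*e/720)*(1/2-e*a/8)*(1-(1-e)*a/2+(1-e)*(1-2*e)*a*a/8)).
 { rewrite !Rmult_assoc. apply Rmult_le_compat_l; [lra|].
   apply Rmult_le_compat; try lra. apply Rmult_le_compat; lra. }
 assert (hT : (1-e)*(1-2*e)*a/48 <= (1-e)*(1-2*e)*(1024/100*e)/48).
 { assert (0 <= (1-e)*(1-2*e)) by nra. nra. }
 nra.
Qed.
Lemma core e a m : 0<e<=1/4 -> 9*e<=a<=1024/100*e ->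
 e*a^2*(1/3-17*a*e/720)*(1/2-e*a/8) <= a/2 - m ->
 1 - a/2 + 3*a^2/40 < 1 - m + (1-e)*m^2/2 - (1-e)*(1-2*e)*m^3/6.
Proof. intros he ha hm.
 set (eps := a/2 - m) in *.
 replace m with (a/2 - eps) by (unfold eps; field).
 set (C1 := 1-(1-e)*a/2+(1-e)*(1-2*e)*a*a/8).
 set (C2 := (1-e)/2 - (1-e)*(1-2*e)*a/4).
 set (C3 := (1-e)*(1-2*e)/6).
 assert (Id : 1 - (a/2-eps) + (1-e)*(a/2-eps)^2/2 - (1-e)*(1-2*e)*(a/2-eps)^3/6 - (1 - a/2 + 3*a^2/40)
   = a^2*((1-e)/8 - 3/40) - (1-e)*(1-2*e)*a^3/48 + eps*C1 + eps^2*C2 + eps^3*C3)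
   by (unfold C1, C2, C3; field).
 assert (hC1 : 1/4 <= C1) by (apply C1_lb; auto).
 assert (hP := polyR e a he ha). fold C1 in hP.
 destruct he as [h1 h2]; destruct ha as [h3 h4].
 assert (ha2 : 0 < a^2) by nra.
 assert (hlo : 0 <= e*a^2*(1/3-17*a*e/720)*(1/2-e*a/8)).
 { assert (a*e <= 64/100) by nra.
   apply Rmult_le_pos; [apply Rmult_le_pos; [apply Rmult_le_pos|]|]; nra. }
 assert (he0 : 0 <= eps) by lra.
 assert (hC2 : 0 <= C2).
 { unfold C2. assert ((1-2*e)*a <= 2) by nra. nra. }
 assert (hC3 : 0 <= C3) by (unfold C3; nra).
 assert (hE1 : e*a^2*(1/3-17*a*e/720)*(1/2-e*a/8)*C1 <= eps*C1) by (apply Rmult_le_compat_r; lra).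
 assert (0 <= eps^2*C2) by (apply Rmult_le_pos; [apply pow2_ge_0|auto]).
 assert (0 <= eps^3*C3) by (apply Rmult_le_pos; [apply pow_le|]; auto).
 assert (0 < a^2*((1-e)/8-3/40-(1-e)*(1-2*e)*a/48+e*(1/3-17*a*e/720)*(1/2-e*a/8)*C1)) by (apply Rmult_lt_0_compat; auto).
 assert (a^2*((1-e)/8-3/40-(1-e)*(1-2*e)*a/48+e*(1/3-17*a*e/720)*(1/2-e*a/8)*C1) =
   a^2*((1-e)/8 - 3/40) - (1-e)*(1-2*e)*a^3/48 + e*a^2*(1/3-17*a*e/720)*(1/2-e*a/8)*C1) by field.
 lra.
Qed.

Lemma PI_lb : 3 < PI.
Proof. assert (t := PI2_3_2). lra. Qed.

Lemma part1 h : (3 <= h)%nat -> sin (bound_h h) / bound_h h < rhs_h h.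
Proof.
 intros hh. unfold bound_h, rhs_h.
 assert (hp1 := PI_lb). assert (hp2 := PI_ub).
 destruct (Nat.eq_dec h 3) as [->|hne].
 { replace (INR 3) with 3 by (simpl; lra).
   replace (3/3) with 1 by field. rewrite sqrt_1, Rmult_1_r, sin_PI, cos_PI3.
   replace (4 / (3 - 1/2) - 1) with (3/5) by field.
   unfold Rdiv at 1. rewrite Rmult_0_l. apply pow_lt. lra. }
 assert (hH : 4 <= INR h) by (replace 4 with (INR 4) by (simpl; lra); apply le_INR; lia).
 set (H := INR h) in *.
 set (e := / H). set (a := PI^2/H).
 assert (he : 0 < e <= 1/4). { unfold e. split. apply Rinv_0_lt_compat; lra.
   apply Rmult_le_reg_r with H; [lra|]. rewrite Rinv_l by lra. lra. }
 assert (hae : a = PI^2 * e) by (unfold a, e; field; lra).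
 assert (hq : 9 <= PI^2 <= 1024/100) by (simpl; nra).
 assert (ha : 9*e <= a <= 1024/100*e) by (rewrite hae; split; apply Rmult_le_compat_r; lra).
 set (t := PI/H). set (s := t^2).
 assert (hs : s = a*e) by (unfold s, t, a, e; field; lra).
 assert (hs1 : 0 < s <= 64/100). { rewrite hs. split. nra.
   assert (a <= 256/100) by lra. nra. }
 set (D := s/2 - s^2/24 + s^3/720).
 assert (hD0 : 0 <= D) by (unfold D; nra).
 assert (hD1 : D <= 1) by (unfold D; nra).
 set (U := 2*D/(2+D)).
 assert (hU : 0 <= U <= 1). { unfold U. split.
   apply Rmult_le_pos; [lra|]. left. apply Rinv_0_lt_compat; lra.
   apply Rmult_le_reg_r with (2+D); [lra|]. field_simplify; lra. }
 set (m := H*U).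
 assert (heps : e*a^2*(1/3-17*a*e/720)*(1/2-e*a/8) <= a/2 - m).
 { assert (hb : s^2*(1/3 - 17*s/720)*(1/2 - s/8) <= s/2 - U) by exact (epsb s hs1).
   assert (E1 : e*a^2*(1/3-17*a*e/720)*(1/2-e*a/8) = H * (s^2*(1/3 - 17*s/720)*(1/2 - s/8))).
   { rewrite hs. unfold e. field. lra. }
   assert (E2 : a/2 - m = H * (s/2 - U)). { unfold m. rewrite hs. unfold e. field. lra. }
   rewrite E1, E2. apply Rmult_le_compat_l; lra. }
 assert (hcore := core e a m he ha heps).
 set (y := PI * sqrt (3/H)).
 assert (hsq : sqrt (3/H) ^ 2 = 3/H). { simpl. rewrite Rmult_1_r. apply sqrt_sqrt.
   apply Rmult_le_pos; [lra|]. left. apply Rinv_0_lt_compat; lra. }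
 assert (hsq0 : 0 < sqrt (3/H)). { apply sqrt_lt_R0. apply Rmult_lt_0_compat; [lra|]. apply Rinv_0_lt_compat; lra. }
 assert (hsq1 : sqrt (3/H) <= 1). { rewrite <- sqrt_1. apply sqrt_le_1_alt.
   apply Rmult_le_reg_r with H; [lra|]. field_simplify; lra. }
 assert (hy2 : y^2 = 3*a). { unfold y. rewrite Rpow_mult_distr, hsq. unfold a. field. lra. }
 assert (hy0 : 0 < y) by (unfold y; nra).
 assert (hyP : y <= PI) by (unfold y; nra).
 assert (hsin := sin_bound y 0 ltac:(lra) hyP).
 replace (2 * (0 + 1))%nat with 2%nat in hsin by reflexivity. rewrite sin2 in hsin.
 assert (hS : sin y / y <= 1 - a/2 + 3*a^2/40).
 { apply Rle_trans with ((y - y^3/6 + y^5/120) / y).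
   - unfold Rdiv. apply Rmult_le_compat_r; [left; apply Rinv_0_lt_compat; lra| lra].
   - right. replace (y^5) with (y*(y^2)^2) by ring. replace (y^3) with (y*y^2) by ring.
     rewrite hy2. field. lra. }
 assert (ht0 : 0 <= t) by (unfold t; apply Rmult_le_pos; [lra| left; apply Rinv_0_lt_compat; lra]).
 assert (ht1 : t <= PI/2). { unfold t. apply Rmult_le_compat_l; [lra|]. apply Rinv_le_contravar; lra. }
 assert (hcos := cos_bound t 1 ltac:(lra) ht1).
 replace (2 * 1 + 1)%nat with 3%nat in hcos by reflexivity. rewrite cos3 in hcos.
 assert (hc : 1 - D <= cos t). { unfold D, s. replace (t^4) with ((t^2)^2) in hcos by ring.
   replace (t^6) with ((t^2)^3) in hcos by ring. lra. }
 assert (hc1 := COS_bound t). 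
 assert (hf : 1 - U <= 4 / (3 - cos t) - 1).
 { assert (E : 1 - U = 4/(2+D) - 1) by (unfold U; field; lra). rewrite E.
   apply Rplus_le_compat_r. unfold Rdiv. apply Rmult_le_compat_l; [lra|].
   apply Rinv_le_contravar; lra. }
 assert (hpow : (1-U)^h <= (4 / (3 - cos t) - 1)^h) by (apply pow_incr; lra).
 assert (hbern := bern3 h U hU). fold H in hbern.
 assert (EP : 1 - H * U + H * (H - 1)/2 * U^2 - H * (H - 1) * (H - 2) / 6 * U^3
   = 1 - m + (1-e)*m^2/2 - (1-e)*(1-2*e)*m^3/6) by (unfold m, e; field; lra).
 fold t. fold y. lra.
Qed.

Theorem mainTheorem8 : forall h : nat, (3 <= h)%nat ->
  sin (bound_h h) / bound_h h < rhs_h h /\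
  (forall x : R, 0 < x < PI -> sin x / x = rhs_h h -> x < bound_h h).
Proof.
 intros h hh. assert (P1 := part1 h hh). split; auto.
 intros x [hx0 hx1] hx.
 assert (hb : 0 < bound_h h).
 { unfold bound_h. assert (hp := PI_lb). apply Rmult_lt_0_compat; [lra|].
   apply sqrt_lt_R0. assert (3 <= INR h) by (replace 3 with (INR 3) by (simpl; lra); apply le_INR; lia).
   apply Rmult_lt_0_compat; [lra|]. apply Rinv_0_lt_compat; lra. }
 destruct (Rlt_le_dec x (bound_h h)) as [l|l]; auto.
 exfalso. destruct l as [l|l].
 - assert (sinc_decr (bound_h h) x hb l hx1 = sinc_decr (bound_h h) x hb l hx1) by reflexivity.
   assert (hd := sinc_decr (bound_h h) x hb l hx1). lra.
 - subst x. lra.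
Qed.
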